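(* Let $\mathcal{A}$ be a Desargues affine plane, let $\ell_1=\ell^{OI}$ and $\ell_2$ be lines of $\mathcal{A}$ ($O\neq I$), and let $P_P:\ell_1\to\ell_2$ be a parallel projection. Equip $\ell_1$ with the skew field structure with zero $O$ and unit $I$, and $\ell_2$ with the skew field structure with zero $P_P(O)$ and unit $P_P(I)$. Then for all $A,B\in\ell_1$ with $B\neq O$, \[ P_P(r(A:B))=r(P_P(A):P_P(B)), \] where the ratio on the left is computed in $\ell_1$ and the ratio on the right in $\ell_2$.
   Context: A Desargues affine plane is an incidence structure of points and lines in which any two distinct points lie on exactly one line, through a point not on a line $\ell$ there is exactly one line disjoint from $\ell$ (Playfair), there exist three non-collinear points, and Desargues' axiom holds: if $A,B,C,A',B',C'$ are points such that the pairwise distinct lines $AA',BB',CC'$ are either all parallel or all pass through one point, and $AB\parallel A'B'$, $BC\parallel B'C'$ (with $AB\neq A'B'$, $BC\neq B'C'$, $A\ne C$, $A'\ne C'$), then $AC\parallel A'C'$. Skew field on a line: for distinct points $O,I$ and points $A,B$ on the line $\ell^{OI}$, addition is defined by: choose a point $B_1\notin\ell^{OI}$; let $P_1$ be the intersection of the line through $B_1$ parallel to $\ell^{OI}$ with the line through $A$ parallel to $OB_1$; then $A+B$ is the intersection of $\ell^{OI}$ with the line through $P_1$ parallel to $BB_1$. Multiplication is defined by: choose $B_1\notin\ell^{OI}$; let $P_1$ be the intersection of the line through $A$ parallel to $IB_1$ with the line $OB_1$; then $A\cdot B$ is the intersection of $\ell^{OI}$ with the line through $P_1$ parallel to $BB_1$.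 These operations do not depend on the choice of $B_1$ and make $(\ell^{OI},+,\cdot)$ a skew field with zero $O$ and unit $I$; the same construction applies to any line with any chosen pair of distinct points as zero and unit. $X^{-1}$ denotes the multiplicative inverse. Ratio of two points on a line with chosen zero $O$: $r(A:B)=B^{-1}A$ for $B\neq O$. A parallel projection between lines $\ell_1,\ell_2$ is a map $P_P:\ell_1\to\ell_2$ such that for all $A,B\in\ell_1$ the lines $A\,P_P(A)$ and $B\,P_P(B)$ are parallel (it is a bijection). *)

(* Defs.v *)
From Stdlib Require Import Classical ClassicalEpsilon.

Section Generic.
Variables (P L : Type) (inc : P -> L -> Prop).
Definition gpar (l m : L) : Prop := l = m \/ ~ (exists X, inc X l /\ inc X m).
Definition gdisjoint (l m : L) : Prop := ~ (exists X, inc X l /\ inc X m).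
End Generic.
Arguments gpar {P L} inc l m.
Arguments gdisjoint {P L} inc l m.

Record DesarguesAffinePlane := {
  Point : Type;
  Line : Type;
  inc : Point -> Line -> Prop;
  ax_line : forall A B : Point, A <> B ->
      exists l, (inc A l /\ inc B l) /\
                forall m, inc A m /\ inc B m -> m = l;
  ax_playfair : forall (A : Point) (l : Line), ~ inc A l ->
      exists m, (inc A m /\ gdisjoint inc m l) /\
                forall n, inc A n /\ gdisjoint inc n l -> n = m;
  ax_noncol : exists A B C : Point, A <> B /\ B <> C /\ A <> C /\
      ~ (exists l, inc A l /\ inc B l /\ inc C l);
  (* Desargues' axiom (lines named explicitly: a = AA', ab = AB, ...) *)
  ax_desargues : forall (A B C A' B' C' : Point)
      (a b c ab a'b' bc b'c' ac a'c' : Line),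
      A <> A' -> B <> B' -> C <> C' ->
      A <> B -> A' <> B' -> B <> C -> B' <> C' -> A <> C -> A' <> C' ->
      inc A a -> inc A' a -> inc B b -> inc B' b -> inc C c -> inc C' c ->
      inc A ab -> inc B ab -> inc A' a'b' -> inc B' a'b' ->
      inc B bc -> inc C bc -> inc B' b'c' -> inc C' b'c' ->
      inc A ac -> inc C ac -> inc A' a'c' -> inc C' a'c' ->
      a <> b -> b <> c -> a <> c ->
      ((gpar inc a b /\ gpar inc b c /\ gpar inc a c) \/
       (exists S, inc S a /\ inc S b /\ inc S c)) ->
      gpar inc ab a'b' -> ab <> a'b' ->
      gpar inc bc b'c' -> bc <> b'c' ->
      gpar inc ac a'c'
}.

Arguments inc {d} _ _.

Section Plane.
Variable Pi : DesarguesAffinePlane.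
Local Notation Pt := (Point Pi).
Local Notation Ln := (Line Pi).

Definition par (l m : Ln) : Prop := gpar (@inc Pi) l m.

Lemma point_inh : inhabited Pt.
Proof. destruct (ax_noncol Pi) as [A _]. exact (inhabits A). Qed.

Lemma line_inh : inhabited Ln.
Proof.
  destruct (ax_noncol Pi) as [A [B [C [H _]]]].
  destruct (ax_line Pi A B H) as [l _]. exact (inhabits l).
Qed.

Definition the_point (Q : Pt -> Prop) : Pt := epsilon point_inh Q.
Definition the_line (Q : Ln -> Prop) : Ln := epsilon line_inh Q.

Definition line_thru (X Y : Pt) : Ln := the_line (fun l => inc X l /\ inc Y l).
Definition par_thru (X : Pt) (m : Ln) : Ln := the_line (fun n => inc X n /\ par n m).
Definition meet (l m : Ln) : Pt := the_point (fun X => inc X l /\ inc X m).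

Definition add (O I A B : Pt) : Pt :=
  let l := line_thru O I in
  let B1 := the_point (fun X => ~ inc X l) in
  let P1 := meet (par_thru B1 l) (par_thru A (line_thru O B1)) in
  meet l (par_thru P1 (line_thru B B1)).

Definition mul (O I A B : Pt) : Pt :=
  let l := line_thru O I in
  let B1 := the_point (fun X => ~ inc X l) in
  let P1 := meet (par_thru A (line_thru I B1)) (line_thru O B1) in
  meet l (par_thru P1 (line_thru B B1)).

Definition inv (O I X : Pt) : Pt :=
  the_point (fun Y => inc Y (line_thru O I) /\ mul O I X Y = I /\ mul O I Y X = I).

Definition ratio (O I A B : Pt) : Pt := mul O I (inv O I B) A.

Definition parallel_projection (l1 l2 : Ln) (f : Pt -> Pt) : Prop :=
  exists d : Ln, ~ par d l1 /\ ~ par d l2 /\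
    forall A, inc A l1 ->
      inc (f A) l2 /\ exists m, inc A m /\ inc (f A) m /\ par m d.

End Plane.

(* Main.v *)
Require Import Defs.
From Stdlib Require Import Classical ClassicalEpsilon.

Section S.
Variable Pi : DesarguesAffinePlane.
Local Notation Pt := (Point Pi).
Local Notation Ln := (Line Pi).
Local Notation L := (line_thru Pi).
Local Notation PT := (par_thru Pi).
Local Notation mt := (meet Pi).
Local Notation par := (par Pi).

Lemma the_line_spec (Q : Ln -> Prop) : (exists l, Q l) -> Q (the_line Pi Q).
Proof. intro H. unfold the_line. apply epsilon_spec. exact H. Qed.
Lemma the_point_spec (Q : Pt -> Prop) : (exists l, Q l) -> Q (the_point Pi Q).
Proof. intro H. unfold the_point. apply epsilon_spec. exact H. Qed.

Lemma L_spec (X Y : Pt) : X <> Y -> inc X (L X Y) /\ inc Y (L X Y).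
Proof.
  intro H. destruct (ax_line Pi X Y H) as [l [[h1 h2] _]].
  apply (the_line_spec (fun l => inc X l /\ inc Y l)). eauto.
Qed.
Lemma L1 X Y : X <> Y -> inc X (L X Y).
Proof. intro H; apply (L_spec X Y H). Qed.
Lemma L2 X Y : X <> Y -> inc Y (L X Y).
Proof. intro H; apply (L_spec X Y H). Qed.

Lemma L_uniq (X Y : Pt) l : X <> Y -> inc X l -> inc Y l -> l = L X Y.
Proof.
  intros H h1 h2. destruct (ax_line Pi X Y H) as [l0 [_ U]].
  rewrite (U l (conj h1 h2)). symmetry. apply U. apply L_spec; auto.
Qed.

Lemma two_pts (X Y : Pt) l m : X <> Y -> inc X l -> inc Y l -> inc X m -> inc Y m -> l = m.
Proof. intros. rewrite (L_uniq X Y l), (L_uniq X Y m); auto. Qed.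

Lemma inter_unique (l m : Ln) X Y : l <> m -> inc X l -> inc X m -> inc Y l -> inc Y m -> X = Y.
Proof.
  intros H a b c d. destruct (classic (X = Y)) as [e|e]; auto.
  exfalso. apply H. eapply two_pts; eauto.
Qed.

Lemma L_sym X Y : X <> Y -> L X Y = L Y X.
Proof. intro H. apply L_uniq; auto; apply L_spec; auto. Qed.

Lemma par_refl l : par l l.
Proof. left; auto. Qed.
Lemma par_sym l m : par l m -> par m l.
Proof.
  intros [H|H]; [left; auto|right]. intros [X [a b]]. apply H; eauto.
Qed.
Lemma par_common l m X : par l m -> inc X l -> inc X m -> l = m.
Proof. intros [H|H] a b; auto. exfalso; apply H; eauto. Qed.

Lemma par_trans l m n : par l m -> par m n -> par l n.
Proof.
  intros H1 H2.
  destruct (classic (l = n)) as [e|e]; [left; auto|].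
  destruct (classic (exists X, inc X l /\ inc X n)) as [[X [a b]]|nx]; [|right; auto].
  exfalso.
  destruct (classic (inc X m)) as [xm|xm].
  - apply e. rewrite (par_common l m X), <- (par_common m n X); auto.
  - destruct (ax_playfair Pi X m xm) as [k [_ U]].
    apply e. rewrite (U l), (U n); auto.
    + split; auto. destruct H2 as [H2|H2]. subst; tauto.
      intros [Y [c d]]. apply H2; eauto.
    + split; auto. destruct H1 as [H1|H1]. subst; tauto.
      intros [Y [c d]]. apply H1; eauto.
Qed.

Lemma not_par_meet l m : ~ par l m -> exists X, inc X l /\ inc X m.
Proof. intro H. apply NNPP. intro K. apply H. right. exact K. Qed.

Lemma par_compat a a' b b' : par a a' -> par b b' -> ~ par a b -> ~ par a' b'.
Proof.
  intros h1 h2 h3 h4. apply h3. eapply par_trans; [exact h1|].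
  eapply par_trans; [exact h4|]. apply par_sym; auto.
Qed.

Lemma PT_spec X m : inc X (PT X m) /\ par (PT X m) m.
Proof.
  apply (the_line_spec (fun n => inc X n /\ par n m)).
  destruct (classic (inc X m)) as [h|h].
  - exists m. split; auto. apply par_refl.
  - destruct (ax_playfair Pi X m h) as [k [[a b] _]]. exists k. split; auto. right. exact b.
Qed.
Lemma PT_in X m : inc X (PT X m).
Proof. apply PT_spec. Qed.
Lemma PT_par X m : par (PT X m) m.
Proof. apply PT_spec. Qed.

Lemma PT_uniq X m n : inc X n -> par n m -> n = PT X m.
Proof.
  intros a b. apply (par_common _ _ X); auto; [|apply PT_in].
  eapply par_trans; [exact b|]. apply par_sym, PT_par.
Qed.

Lemma PT_self X m : inc X m -> PT X m = m.
Proof. intro h. symmetry. apply PT_uniq; auto. apply par_refl. Qed.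

Lemma PT_par_eq X m m' : par m m' -> PT X m = PT X m'.
Proof.
  intro h. apply PT_uniq. apply PT_in. eapply par_trans; [apply PT_par| exact h].
Qed.

Lemma PT_L X Y m : X <> Y -> par (L X Y) m -> PT X m = L X Y.
Proof. intros h p. symmetry. apply PT_uniq; auto. apply L1; auto. Qed.

Lemma inPT_L X Y m : inc Y (PT X m) -> X <> Y -> PT X m = L X Y.
Proof. intros h e. apply L_uniq; auto. apply PT_in. Qed.

Lemma inPT_par X Y m : inc Y (PT X m) -> X <> Y -> par (L X Y) m.
Proof. intros h e. rewrite <- (inPT_L X Y m); auto. apply PT_par. Qed.

Lemma par_inPT X Y m : X <> Y -> par (L X Y) m -> inc Y (PT X m).
Proof. intros e p. rewrite (PT_L X Y m); auto. apply L2; auto. Qed.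

Lemma PT_same X Y m : inc Y (PT X m) -> PT Y m = PT X m.
Proof. intro h. symmetry. apply PT_uniq; auto. apply PT_par. Qed.

Lemma PT_sym X Y m : inc Y (PT X m) -> inc X (PT Y m).
Proof. intro h. rewrite (PT_same X Y m h). apply PT_in. Qed.

Lemma PT_trans X Y Z m : inc Y (PT X m) -> inc Z (PT X m) -> inc Z (PT Y m).
Proof. intros h1 h2. rewrite (PT_same X Y m h1). auto. Qed.

Lemma meet_spec l m : ~ par l m -> inc (mt l m) l /\ inc (mt l m) m.
Proof.
  intro h. apply (the_point_spec (fun X => inc X l /\ inc X m)). apply not_par_meet; auto.
Qed.

Lemma meet_uniq l m X : ~ par l m -> inc X l -> inc X m -> X = mt l m.
Proof.
  intros h a b. destruct (meet_spec l m h) as [c d].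
  apply (inter_unique l m); auto. intro e; subst; apply h, par_refl.
Qed.

Lemma par_disj l m X : par l m -> l <> m -> inc X l -> ~ inc X m.
Proof. intros p e a b. apply e. eapply par_common; eauto. Qed.

Lemma not_par_two l m X : l <> m -> inc X l -> inc X m -> ~ par l m.
Proof. intros e a b p. apply e. eapply par_common; eauto. Qed.

Lemma not_on_other (l m : Ln) O X : l <> m -> inc O l -> inc O m -> inc X l -> X <> O -> ~ inc X m.
Proof. intros e a b c d f. apply d. eapply inter_unique; eauto. Qed.

Lemma avoid2 l m P Q : ~ par l m -> inc P l -> ~ inc P m -> inc Q m -> ~ inc Q l ->
  exists R, ~ inc R l /\ ~ inc R m.
Proof.
  intros h a b c d.
  assert (np : ~ par (PT P m) (PT Q l)).
  { eapply par_compat. apply par_sym, PT_par. apply par_sym, PT_par. intro p. apply h. apply par_sym; auto. }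
  destruct (meet_spec _ _ np) as [r1 r2].
  exists (mt (PT P m) (PT Q l)). split.
  - intro r. apply d. rewrite <- (par_common (PT Q l) l _ (PT_par Q l) r2 r). apply PT_in.
  - intro r. apply b. rewrite <- (par_common (PT P m) m _ (PT_par P m) r1 r). apply PT_in.
Qed.

Lemma exists_off (l : Ln) : exists X : Pt, ~ inc X l.
Proof.
  destruct (ax_noncol Pi) as [A [B [C [_ [_ [_ H]]]]]].
  apply NNPP. intro K. apply H. exists l.
  repeat split; apply NNPP; intro h; apply K; eauto.
Qed.


Lemma desargues_pts (A B C A' B' C' : Pt) :
  A <> A' -> B <> B' -> C <> C' -> A <> B -> A' <> B' -> B <> C -> B' <> C' ->
  A <> C -> A' <> C' ->
  L A A' <> L B B' -> L B B' <> L C C' -> L A A' <> L C C' ->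
  ((par (L A A') (L B B') /\ par (L B B') (L C C') /\ par (L A A') (L C C')) \/
   (exists S, inc S (L A A') /\ inc S (L B B') /\ inc S (L C C'))) ->
  par (L A B) (L A' B') -> L A B <> L A' B' ->
  par (L B C) (L B' C') -> L B C <> L B' C' ->
  par (L A C) (L A' C').
Proof.
  intros.
  apply (ax_desargues Pi A B C A' B' C' (L A A') (L B B') (L C C') (L A B) (L A' B')
           (L B C) (L B' C') (L A C) (L A' C')); auto;
  try (apply L1; auto); try (apply L2; auto).
Qed.

Lemma same_shift (A B B' : Pt) b : inc B b -> inc B' b -> ~ inc A b ->
  par (L A B) (L A B') -> B = B'.
Proof.
  intros h1 h2 h3 p.
  assert (e1 : A <> B) by (intro e; rewrite e in h3; tauto).
  assert (e2 : A <> B') by (intro e; rewrite e in h3; tauto).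
  assert (E : L A B = L A B') by (apply (par_common _ _ A p); apply L1; auto).
  apply (inter_unique (L A B) b); auto.
  - intro e. apply h3. rewrite <- e. apply L1; auto.
  - apply L2; auto.
  - rewrite E. apply L2; auto.
Qed.

Lemma CD (O : Pt) a b c A B C A' B' C' :
  a <> b -> b <> c -> a <> c -> inc O a -> inc O b -> inc O c ->
  inc A a -> inc A' a -> inc B b -> inc B' b -> inc C c -> inc C' c ->
  A <> O -> A' <> O -> B <> O -> B' <> O -> C <> O -> C' <> O ->
  par (L A B) (L A' B') -> par (L B C) (L B' C') -> par (L A C) (L A' C').
Proof.
  intros ab bc ac Oa Ob Oc Aa A'a Bb B'b Cc C'c AO A'O BO B'O CO C'O p1 p2.
  assert (ba : b <> a) by congruence. assert (cb : c <> b) by congruence. assert (ca : c <> a) by congruence.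
  assert (nAb : ~ inc A b) by (apply (not_on_other a b O A); auto).
  assert (nA'b : ~ inc A' b) by (apply (not_on_other a b O A'); auto).
  assert (nAc : ~ inc A c) by (apply (not_on_other a c O A); auto).
  assert (nA'c : ~ inc A' c) by (apply (not_on_other a c O A'); auto).
  assert (nBa : ~ inc B a) by (apply (not_on_other b a O B); auto).
  assert (nB'a : ~ inc B' a) by (apply (not_on_other b a O B'); auto).
  assert (nBc : ~ inc B c) by (apply (not_on_other b c O B); auto).
  assert (nB'c : ~ inc B' c) by (apply (not_on_other b c O B'); auto).
  assert (nCa : ~ inc C a) by (apply (not_on_other c a O C); auto).
  assert (nC'a : ~ inc C' a) by (apply (not_on_other c a O C'); auto).
  assert (nCb : ~ inc C b) by (apply (not_on_other c b O C); auto).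
  assert (nC'b : ~ inc C' b) by (apply (not_on_other c b O C'); auto).
  assert (AB : A <> B) by (intro e; rewrite e in nAb; tauto).
  assert (A'B' : A' <> B') by (intro e; rewrite e in nA'b; tauto).
  assert (BC : B <> C) by (intro e; rewrite e in nBc; tauto).
  assert (B'C' : B' <> C') by (intro e; rewrite e in nB'c; tauto).
  assert (AC : A <> C) by (intro e; rewrite e in nAc; tauto).
  assert (A'C' : A' <> C') by (intro e; rewrite e in nA'c; tauto).
  destruct (classic (A = A')) as [e|AA'].
  - rewrite <- e in *.
    assert (eB : B = B') by (apply (same_shift A B B' b); auto). rewrite <- eB in *.
    assert (eC : C = C') by (apply (same_shift B C C' c); auto). rewrite <- eC in *.
    apply par_refl.
  - assert (BB' : B <> B').
    { intro e. rewrite <- e in p1, A'B'. rewrite (L_sym A B), (L_sym A' B) in p1; auto.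
      apply AA'. apply (same_shift B A A' a); auto. }
    assert (CC' : C <> C').
    { intro e. rewrite <- e in p2, B'C'. rewrite (L_sym B C), (L_sym B' C) in p2; auto.
      apply BB'. apply (same_shift C B B' b); auto. }
    assert (Ea : a = L A A') by (apply L_uniq; auto).
    assert (Eb : b = L B B') by (apply L_uniq; auto).
    assert (Ec : c = L C C') by (apply L_uniq; auto).
    apply (desargues_pts A B C A' B' C'); try rewrite <- Ea; try rewrite <- Eb; try rewrite <- Ec; auto.
    + right. exists O. auto.
    + intro e. apply nBa. assert (E : L A B = a).
      { apply (two_pts A A'); auto; first [apply L1; auto | rewrite e; apply L1; auto]. }
      rewrite <- E. apply L2; auto.
    + intro e. apply nCb. assert (E : L B C = b).
      { apply (two_pts B B'); auto; first [apply L1; auto | rewrite e; apply L1; auto]. }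
      rewrite <- E. apply L2; auto.
Qed.

Definition tau (O O' P : Pt) : Pt := mt (PT P (L O O')) (PT O' (L O P)).

Section Tau.
Variables O O' : Pt.
Hypothesis OO' : O <> O'.

Lemma O_n : inc O (L O O'). Proof. apply L1; auto. Qed.
Lemma O'_n : inc O' (L O O'). Proof. apply L2; auto. Qed.

Lemma neqO P : ~ inc P (L O O') -> O <> P.
Proof. intros h e. apply h. rewrite <- e. apply O_n. Qed.
Lemma neqO' P : ~ inc P (L O O') -> O' <> P.
Proof. intros h e. apply h. rewrite <- e. apply O'_n. Qed.

Lemma LOP_ne_n P : ~ inc P (L O O') -> L O P <> L O O'.
Proof. intros h e. apply h. rewrite <- e. apply L2. apply neqO; auto. Qed.

Lemma PTn_ne_n P : ~ inc P (L O O') -> PT P (L O O') <> L O O'.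
Proof. intros h e. apply h. rewrite <- e. apply PT_in. Qed.

Lemma tau_np P : ~ inc P (L O O') -> ~ par (PT P (L O O')) (PT O' (L O P)).
Proof.
  intro h. eapply par_compat. apply par_sym, PT_par. apply par_sym, PT_par.
  apply (not_par_two _ _ O). intro e. apply (LOP_ne_n P h). auto.
  apply O_n. apply L1. apply neqO; auto.
Qed.

Lemma tau_1 P : ~ inc P (L O O') -> inc (tau O O' P) (PT P (L O O')).
Proof. intro h. apply (meet_spec _ _ (tau_np P h)). Qed.
Lemma tau_2 P : ~ inc P (L O O') -> inc (tau O O' P) (PT O' (L O P)).
Proof. intro h. apply (meet_spec _ _ (tau_np P h)). Qed.
Lemma tau_char P T : ~ inc P (L O O') -> inc T (PT P (L O O')) -> inc T (PT O' (L O P)) -> T = tau O O' P.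
Proof. intros h a b. apply meet_uniq; auto. apply tau_np; auto. Qed.

Lemma tau_notn P : ~ inc P (L O O') -> ~ inc (tau O O' P) (L O O').
Proof.
  intro h. apply (par_disj (PT P (L O O')) (L O O')). apply PT_par. apply PTn_ne_n; auto.
  apply tau_1; auto.
Qed.

Lemma tau_neqP P : ~ inc P (L O O') -> tau O O' P <> P.
Proof.
  intros h e. pose proof (tau_2 P h) as t. rewrite e in t.
  assert (E : PT O' (L O P) = L O P).
  { apply (par_common _ _ P). apply PT_par. auto. apply L2. apply neqO; auto. }
  apply (LOP_ne_n P h). apply (two_pts O O'); auto. apply L1, neqO; auto.
  rewrite <- E. apply PT_in. apply O_n. apply O'_n.
Qed.

Lemma TAU B C : ~ inc B (L O O') -> ~ inc C (L O O') -> B <> C ->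
  tau O O' B <> tau O O' C /\ par (L B C) (L (tau O O' B) (tau O O' C)).
Proof.
  intros hB hC BC.
  pose proof (tau_1 B hB) as b1. pose proof (tau_2 B hB) as b2.
  pose proof (tau_1 C hC) as c1. pose proof (tau_2 C hC) as c2.
  pose proof (tau_notn B hB) as bn. pose proof (tau_notn C hC) as cn.
  assert (OB := neqO B hB). assert (OC := neqO C hC).
  destruct (classic (inc C (PT B (L O O')))) as [H|H].
  - assert (E : PT C (L O O') = PT B (L O O')) by (apply PT_same; auto).
    assert (NE : tau O O' B <> tau O O' C).
    { intro e. rewrite <- e in c2.
      assert (E1 : PT O' (L O B) = PT O' (L O C)).
      { rewrite (inPT_L _ _ _ b2), (inPT_L _ _ _ c2); auto; apply neqO'; auto. }
      assert (p : par (L O B) (L O C)).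
      { eapply par_trans. apply par_sym, (PT_par O' (L O B)). rewrite E1. apply PT_par. }
      assert (E2 : L O B = L O C) by (apply (par_common _ _ O p); apply L1; auto).
      apply BC. apply (inter_unique (L O B) (PT B (L O O'))); auto.
      + intro e2. apply (PTn_ne_n B hB). apply (par_common _ _ O). apply PT_par.
        rewrite <- e2. apply L1; auto. apply O_n.
      + apply L2; auto.
      + apply PT_in.
      + rewrite E2. apply L2; auto. }
    split; auto.
    assert (E3 : PT B (L O O') = L (tau O O' B) (tau O O' C)).
    { apply L_uniq; auto. rewrite <- E; auto. }
    rewrite <- E3, <- (inPT_L _ _ _ H BC). apply par_refl.
  - assert (NE : tau O O' B <> tau O O' C).
    { intro e. rewrite <- e in c1. apply H.
      rewrite <- (PT_same _ _ _ b1). rewrite (par_common (PT (tau O O' B) (L O O')) (PT C (L O O')) (tau O O' B)).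
      apply PT_in. eapply par_trans. apply PT_par. apply par_sym, PT_par. apply PT_in. auto. }
    split; auto.
    destruct (classic (inc C (L O B))) as [H2|H2].
    + assert (E1 : L O B = L O C) by (apply L_uniq; auto; apply L1; auto).
      assert (E2 : L O B = L B C) by (apply L_uniq; auto; apply L2; auto).
      rewrite <- E2. rewrite E1 in b2.
      assert (E3 : PT O' (L O C) = L (tau O O' B) (tau O O' C)) by (apply L_uniq; auto).
      rewrite <- E3, E1. apply par_sym, PT_par.
    + assert (EB : L B (tau O O' B) = PT B (L O O')).
      { symmetry; apply inPT_L; auto. apply not_eq_sym, tau_neqP; auto. }
      assert (EC : L C (tau O O' C) = PT C (L O O')).
      { symmetry; apply inPT_L; auto. apply not_eq_sym, tau_neqP; auto. }
      assert (EB' : L (tau O O' B) O' = PT O' (L O B)).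
      { rewrite L_sym. symmetry; apply inPT_L; auto. apply neqO'; auto. apply not_eq_sym, neqO'; auto. }
      assert (EC' : L O' (tau O O' C) = PT O' (L O C)).
      { symmetry; apply inPT_L; auto. apply neqO'; auto. }
      assert (NBC : PT B (L O O') <> PT C (L O O')).
      { intro e. apply H. rewrite e. apply PT_in. }
      apply (desargues_pts B O C (tau O O' B) O' (tau O O' C)); auto.
      * apply not_eq_sym, tau_neqP; auto.
      * apply not_eq_sym, tau_neqP; auto.
      * apply not_eq_sym, neqO'; auto.
      * apply neqO'; auto.
      * rewrite EB. apply PTn_ne_n; auto.
      * rewrite EC. apply not_eq_sym, PTn_ne_n; auto.
      * rewrite EB, EC. auto.
      * left. rewrite EB, EC. split; [apply PT_par|split]. apply par_sym, PT_par.
        eapply par_trans. apply PT_par. apply par_sym, PT_par.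
      * rewrite EB', (L_sym B O); auto. apply par_sym, PT_par.
      * rewrite EB', (L_sym B O); auto. intro e. apply (LOP_ne_n B hB).
        apply (two_pts O O'); auto. apply L1; auto. rewrite e. apply PT_in. apply O_n. apply O'_n.
      * rewrite EC'. apply par_sym, PT_par.
      * rewrite EC'. intro e. apply (LOP_ne_n C hC).
        apply (two_pts O O'); auto. apply L1; auto. rewrite e. apply PT_in. apply O_n. apply O'_n.
Qed.

End Tau.

Definition P1 (O I B1 A : Pt) : Pt := mt (PT A (L I B1)) (L O B1).
Definition mulB (O I B1 A B : Pt) : Pt := mt (L O I) (PT (P1 O I B1 A) (L B B1)).

Lemma mul_mulB O I A B : mul Pi O I A B = mulB O I (the_point Pi (fun X => ~ inc X (L O I))) A B.
Proof. reflexivity. Qed.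

Section Mul.
Variables O I : Pt.
Hypothesis OI : O <> I.

Lemma O_l : inc O (L O I). Proof. apply L1; auto. Qed.
Lemma I_l : inc I (L O I). Proof. apply L2; auto. Qed.

Lemma off_neqO B1 : ~ inc B1 (L O I) -> O <> B1.
Proof. intros h e. apply h. rewrite <- e. apply O_l. Qed.
Lemma off_neq X B1 : inc X (L O I) -> ~ inc B1 (L O I) -> X <> B1.
Proof. intros h h' e. apply h'. rewrite <- e. auto. Qed.

Lemma LOB1_ne B1 : ~ inc B1 (L O I) -> L O B1 <> L O I.
Proof. intros h e. apply h. rewrite <- e. apply L2, off_neqO; auto. Qed.

Lemma I_notOB1 B1 : ~ inc B1 (L O I) -> ~ inc I (L O B1).
Proof.
  intros h i. apply (LOB1_ne B1 h). apply L_uniq; auto. apply L1, off_neqO; auto.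
Qed.

Lemma notl_on_OB1 B1 X : ~ inc B1 (L O I) -> inc X (L O I) -> X <> O -> ~ inc X (L O B1).
Proof.
  intros h x e. apply (not_on_other (L O I) (L O B1) O X); auto.
  apply not_eq_sym, LOB1_ne; auto. apply O_l. apply L1, off_neqO; auto.
Qed.

Lemma onOB1_notl B1 X : ~ inc B1 (L O I) -> inc X (L O B1) -> X <> O -> ~ inc X (L O I).
Proof.
  intros h x e. apply (not_on_other (L O B1) (L O I) O X); auto.
  apply LOB1_ne; auto. apply L1, off_neqO; auto. apply O_l.
Qed.

Lemma np_l X B1 : inc X (L O I) -> ~ inc B1 (L O I) -> ~ par (L X B1) (L O I).
Proof.
  intros h h'. apply (not_par_two _ _ X). intro e. apply h'. rewrite <- e. apply L2, off_neq; auto.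
  apply L1, off_neq; auto. auto.
Qed.

Lemma np1 B1 A : ~ inc B1 (L O I) -> ~ par (PT A (L I B1)) (L O B1).
Proof.
  intro h. eapply par_compat. apply par_sym, PT_par. apply par_refl.
  apply (not_par_two _ _ B1). intro e. apply (I_notOB1 B1 h). rewrite <- e. apply L1, off_neq; auto. apply I_l.
  apply L2, off_neq; auto. apply I_l. apply L2, off_neqO; auto.
Qed.

Lemma P1_1 B1 A : ~ inc B1 (L O I) -> inc (P1 O I B1 A) (PT A (L I B1)).
Proof. intro h. apply (meet_spec _ _ (np1 B1 A h)). Qed.
Lemma P1_2 B1 A : ~ inc B1 (L O I) -> inc (P1 O I B1 A) (L O B1).
Proof. intro h. apply (meet_spec _ _ (np1 B1 A h)). Qed.
Lemma P1_char B1 A P : ~ inc B1 (L O I) -> inc P (L O B1) -> inc P (PT A (L I B1)) -> P = P1 O I B1 A.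
Proof. intros h a b. apply meet_uniq; auto. apply np1; auto. Qed.

Lemma np2 B1 B P : ~ inc B1 (L O I) -> inc B (L O I) -> ~ par (L O I) (PT P (L B B1)).
Proof.
  intros h b. eapply par_compat. apply par_refl. apply par_sym, PT_par.
  intro p. apply (np_l B B1 b h). apply par_sym; auto.
Qed.

Lemma mulB_1 B1 A B : ~ inc B1 (L O I) -> inc B (L O I) -> inc (mulB O I B1 A B) (L O I).
Proof. intros h b. apply (meet_spec _ _ (np2 B1 B _ h b)). Qed.
Lemma mulB_2 B1 A B : ~ inc B1 (L O I) -> inc B (L O I) ->
  inc (mulB O I B1 A B) (PT (P1 O I B1 A) (L B B1)).
Proof. intros h b. apply (meet_spec _ _ (np2 B1 B _ h b)). Qed.

Lemma mulB_char B1 A B P C : ~ inc B1 (L O I) -> inc B (L O I) ->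
  inc P (L O B1) -> inc P (PT A (L I B1)) -> inc C (L O I) -> inc C (PT P (L B B1)) ->
  mulB O I B1 A B = C.
Proof.
  intros h b p1 p2 c1 c2. unfold mulB. rewrite <- (P1_char B1 A P); auto.
  symmetry. apply meet_uniq; auto. apply np2; auto.
Qed.

Lemma mulB_0l B1 B : ~ inc B1 (L O I) -> inc B (L O I) -> mulB O I B1 O B = O.
Proof.
  intros h b. apply (mulB_char B1 O B O O); auto; try apply PT_in.
  apply L1, off_neqO; auto. apply O_l.
Qed.

Lemma mulB_0r B1 A : ~ inc B1 (L O I) -> mulB O I B1 A O = O.
Proof.
  intros h. apply (mulB_char B1 A O (P1 O I B1 A) O); auto.
  apply O_l. apply P1_2; auto. apply P1_1; auto. apply O_l.
  rewrite PT_self. apply L1, off_neqO; auto. apply P1_2; auto.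
Qed.

Lemma P1_nO B1 A : ~ inc B1 (L O I) -> inc A (L O I) -> A <> O -> P1 O I B1 A <> O.
Proof.
  intros h a e E. pose proof (P1_1 B1 A h) as t. rewrite E in t.
  assert (E1 : PT A (L I B1) = L O I).
  { rewrite (inPT_L _ _ _ t e). symmetry. apply L_uniq; auto. apply O_l. }
  assert (E2 : L I B1 = L O I).
  { apply (par_common _ _ I). apply par_sym. rewrite <- E1. apply PT_par.
    apply L1, off_neq; auto. apply I_l. apply I_l. }
  apply h. rewrite <- E2. apply L2, off_neq; auto. apply I_l.
Qed.

Lemma P1_notl B1 A : ~ inc B1 (L O I) -> inc A (L O I) -> A <> O -> ~ inc (P1 O I B1 A) (L O I).
Proof. intros h a e. apply (onOB1_notl B1); auto. apply P1_2; auto. apply P1_nO; auto. Qed.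

Lemma mulB_nO B1 A B : ~ inc B1 (L O I) -> inc A (L O I) -> A <> O -> inc B (L O I) -> B <> O ->
  mulB O I B1 A B <> O.
Proof.
  intros h a ea b eb E. pose proof (mulB_2 B1 A B h b) as t. rewrite E in t.
  pose proof (P1_nO B1 A h a ea) as n1. pose proof (P1_2 B1 A h) as p2.
  assert (E1 : PT (P1 O I B1 A) (L B B1) = L O B1).
  { rewrite (inPT_L _ _ _ t n1). symmetry. apply L_uniq; auto. apply L1, off_neqO; auto. }
  assert (E2 : L O B1 = L B B1).
  { apply (par_common _ _ B1). rewrite <- E1. apply PT_par. apply L2, off_neqO; auto. apply L2, off_neq; auto. }
  apply (notl_on_OB1 B1 B h b eb). rewrite E2. apply L1, off_neq; auto.
Qed.

Lemma DIL A B C : inc A (L O I) -> A <> O -> ~ inc B (L O I) -> ~ inc C (L O I) -> B <> C ->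
  P1 O I B A <> P1 O I C A /\ par (L B C) (L (P1 O I B A) (P1 O I C A)).
Proof.
  intros a ea hB hC BC.
  pose proof (P1_1 B A hB) as b1. pose proof (P1_2 B A hB) as b2.
  pose proof (P1_1 C A hC) as c1. pose proof (P1_2 C A hC) as c2.
  pose proof (P1_nO B A hB a ea) as bn. pose proof (P1_nO C A hC a ea) as cn.
  pose proof (P1_notl B A hB a ea) as bl. pose proof (P1_notl C A hC a ea) as cl.
  assert (OB := off_neqO B hB). assert (OC := off_neqO C hC).
  destruct (classic (inc C (L O B))) as [H|H].
  - assert (E : L O C = L O B) by (symmetry; apply L_uniq; auto; apply L1; auto).
    rewrite E in c2.
    assert (NE : P1 O I B A <> P1 O I C A).
    { intro e. rewrite <- e in c1.
      assert (AD : A <> P1 O I B A) by (intro e2; apply bl; rewrite <- e2; auto).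
      assert (E1 : PT A (L I B) = PT A (L I C)).
      { rewrite (inPT_L _ _ _ b1 AD), (inPT_L _ _ _ c1 AD). auto. }
      assert (p : par (L I B) (L I C)).
      { eapply par_trans. apply par_sym, (PT_par A (L I B)). rewrite E1. apply PT_par. }
      assert (E2 : L I B = L I C).
      { apply (par_common _ _ I p); apply L1; apply off_neq; auto; apply I_l. }
      apply BC. apply (inter_unique (L I B) (L O B)); auto.
      + intro e2. apply (I_notOB1 B hB). rewrite <- e2. apply L1, off_neq; auto. apply I_l.
      + apply L2, off_neq; auto. apply I_l.
      + apply L2; auto.
      + rewrite E2. apply L2, off_neq; auto. apply I_l. }
    split; auto.
    assert (E3 : L O B = L B C) by (apply L_uniq; auto; apply L2; auto).
    assert (E4 : L O B = L (P1 O I B A) (P1 O I C A)) by (apply L_uniq; auto).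
    rewrite <- E3, <- E4. apply par_refl.
  - assert (lB : L O B <> L O I) by (apply LOB1_ne; auto).
    assert (lC : L O C <> L O I) by (apply LOB1_ne; auto).
    assert (BCl : L O B <> L O C).
    { intro e. apply H. rewrite e. apply L2; auto. }
    assert (NE : P1 O I B A <> P1 O I C A).
    { intro e. apply bn. apply (inter_unique (L O B) (L O C)); auto.
      rewrite e; auto. apply L1; auto. apply L1; auto. }
    split; auto.
    apply (CD O (L O B) (L O I) (L O C) B I C (P1 O I B A) A (P1 O I C A)); auto;
      try (apply L1; auto); try (apply L2; auto); try apply O_l; try apply I_l.
    + assert (AD : A <> P1 O I B A) by (intro e; apply bl; rewrite <- e; auto).
      assert (IB : I <> B) by (apply off_neq; auto; apply I_l).
      rewrite (L_sym B I), (L_sym (P1 O I B A) A); auto.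
      rewrite <- (inPT_L _ _ _ b1 AD). apply par_sym, PT_par.
    + rewrite <- (inPT_L _ _ _ c1). apply par_sym, PT_par. intro e; apply cl; rewrite <- e; auto.
Qed.



Lemma IND1 B1 B2 A B : ~ inc B1 (L O I) -> ~ inc B2 (L O I) -> ~ inc B2 (L O B1) ->
  inc A (L O I) -> inc B (L O I) -> mulB O I B1 A B = mulB O I B2 A B.
Proof.
  intros h1 h2 h12 a b.
  destruct (classic (A = O)) as [eA|eA].
  { rewrite eA, !mulB_0l; auto. }
  destruct (classic (B = O)) as [eB|eB].
  { rewrite eB, !mulB_0r; auto. }
  symmetry. apply (mulB_char B2 A B (P1 O I B2 A)); auto.
  apply P1_2; auto. apply P1_1; auto. apply mulB_1; auto.
  set (C := mulB O I B1 A B).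
  assert (c1 : inc C (L O I)) by (apply mulB_1; auto).
  assert (c2 : inc C (PT (P1 O I B1 A) (L B B1))) by (apply mulB_2; auto).
  assert (cn : C <> O) by (apply mulB_nO; auto).
  assert (B12 : B1 <> B2) by (intro e; apply h12; rewrite <- e; apply L2, off_neqO; auto).
  destruct (DIL A B1 B2 a eA h1 h2 B12) as [_ pd].
  assert (D1C : P1 O I B1 A <> C) by (intro e; apply (P1_notl B1 A h1 a eA); rewrite e; auto).
  assert (D2C : P1 O I B2 A <> C) by (intro e; apply (P1_notl B2 A h2 a eA); rewrite e; auto).
  apply par_inPT; auto. rewrite (L_sym _ C); auto. apply par_sym.
  apply (CD O (L O I) (L O B1) (L O B2) B B1 B2 C (P1 O I B1 A) (P1 O I B2 A)); auto.
  - apply not_eq_sym, LOB1_ne; auto.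
  - intro e. apply h12. rewrite e. apply L2, off_neqO; auto.
  - apply not_eq_sym, LOB1_ne; auto.
  - apply O_l; auto.
  - apply L1, off_neqO; auto.
  - apply L1, off_neqO; auto.
  - apply L2, off_neqO; auto.
  - apply P1_2; auto.
  - apply L2, off_neqO; auto.
  - apply P1_2; auto.
  - apply not_eq_sym, off_neqO; auto.
  - apply P1_nO; auto.
  - apply not_eq_sym, off_neqO; auto.
  - apply P1_nO; auto.
  - rewrite (L_sym C); auto. apply par_sym. apply inPT_par; auto.
Qed.

Lemma IND B1 B2 A B : ~ inc B1 (L O I) -> ~ inc B2 (L O I) ->
  inc A (L O I) -> inc B (L O I) -> mulB O I B1 A B = mulB O I B2 A B.
Proof.
  intros h1 h2 a b.
  destruct (classic (inc B2 (L O B1))) as [H|H]; [|apply IND1; auto].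
  assert (np : ~ par (L O I) (L O B1)).
  { apply (not_par_two _ _ O). apply not_eq_sym, LOB1_ne; auto. apply O_l; auto. apply L1, off_neqO; auto. }
  destruct (avoid2 _ _ I B1 np I_l (I_notOB1 B1 h1) (L2 _ _ (off_neqO B1 h1)) h1)
    as [R [r1 r2]].
  rewrite (IND1 B1 R A B); auto. apply IND1; auto.
  intro r. apply r2. 
  assert (E : L O R = L O B1).
  { apply (two_pts O B2). apply off_neqO; auto. apply L1, off_neqO; auto. auto.
    apply L1, off_neqO; auto. auto. }
  rewrite <- E. apply L2, off_neqO; auto.
Qed.

Lemma MULINJ B1 A Y Y' : ~ inc B1 (L O I) -> inc A (L O I) -> A <> O ->
  inc Y (L O I) -> inc Y' (L O I) -> mulB O I B1 A Y = mulB O I B1 A Y' -> Y = Y'.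
Proof.
  intros h a ea y y' E.
  pose proof (mulB_2 B1 A Y h y) as t1. pose proof (mulB_2 B1 A Y' h y') as t2.
  rewrite <- E in t2. set (C := mulB O I B1 A Y) in *.
  assert (DC : P1 O I B1 A <> C).
  { intro e; apply (P1_notl B1 A h a ea); rewrite e; apply mulB_1; auto. }
  assert (E1 : PT (P1 O I B1 A) (L Y B1) = PT (P1 O I B1 A) (L Y' B1)).
  { rewrite (inPT_L _ _ _ t1 DC), (inPT_L _ _ _ t2 DC). auto. }
  assert (p : par (L Y B1) (L Y' B1)).
  { eapply par_trans. apply par_sym, (PT_par (P1 O I B1 A) (L Y B1)). rewrite E1. apply PT_par. }
  assert (E2 : L Y B1 = L Y' B1).
  { apply (par_common _ _ B1 p); apply L2; apply off_neq; auto. }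
  apply (inter_unique (L Y B1) (L O I)); auto.
  - intro e. apply h. rewrite <- e. apply L2, off_neq; auto.
  - apply L1, off_neq; auto.
  - rewrite E2. apply L1, off_neq; auto.
Qed.

Lemma EXINV B1 A : ~ inc B1 (L O I) -> inc A (L O I) -> A <> O ->
  exists Y, inc Y (L O I) /\ mulB O I B1 A Y = I /\ mulB O I B1 Y A = I.
Proof.
  intros h a ea.
  set (D := P1 O I B1 A).
  assert (d1 : inc D (PT A (L I B1))) by (apply P1_1; auto).
  assert (d2 : inc D (L O B1)) by (apply P1_2; auto).
  assert (dn : D <> O) by (apply P1_nO; auto).
  assert (dl : ~ inc D (L O I)) by (apply P1_notl; auto).
  assert (ID : I <> D) by (intro e; apply dl; rewrite <- e; apply I_l; auto).
  assert (np : ~ par (L O I) (PT B1 (L I D))).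
  { eapply par_compat. apply par_refl. apply par_sym, PT_par.
    intro p. apply (np_l I D); auto. apply I_l; auto. apply par_sym; auto. }
  destruct (meet_spec _ _ np) as [y1 y2].
  set (Y := mt (L O I) (PT B1 (L I D))) in *.
  assert (YB1 : Y <> B1) by (apply off_neq; auto).
  exists Y. split; auto. split.
  - apply (mulB_char B1 A Y D I); auto. apply I_l; auto.
    rewrite (L_sym Y B1); auto. rewrite <- (inPT_L _ _ _ y2); auto.
    rewrite (PT_par_eq D _ (L I D)). rewrite PT_self. apply L1; auto. apply L2; auto. apply PT_par.
  - rewrite (IND B1 D); auto.
    apply (mulB_char D Y A B1 I); auto.
    + assert (E : L O D = L O B1) by (symmetry; apply L_uniq; auto; apply L1, off_neqO; auto).
      rewrite E. apply L2, off_neqO; auto.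
    + apply PT_sym; auto.
    + apply I_l; auto.
    + assert (AD : A <> D) by (intro e; apply dl; rewrite <- e; auto).
      rewrite <- (inPT_L _ _ _ d1 AD).
      rewrite (PT_par_eq B1 _ (L I B1)). rewrite PT_self. apply L1, off_neq; auto. apply I_l; auto.
      apply L2, off_neq; auto. apply I_l; auto. apply PT_par.
Qed.

End Mul.

Definition Rel (dd l1 l2 : Ln) (P P' : Pt) : Prop := inc P l1 /\ inc P' l2 /\ inc P' (PT P dd).

Lemma aux_off O I : ~ inc (the_point Pi (fun X => ~ inc X (L O I))) (L O I).
Proof. apply (the_point_spec (fun X => ~ inc X (L O I))). apply exists_off. Qed.

Lemma mul_any O I Q A B : O <> I -> ~ inc Q (L O I) -> inc A (L O I) -> inc B (L O I) ->
  mul Pi O I A B = mulB O I Q A B.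
Proof. intros. rewrite mul_mulB. apply IND; auto. apply aux_off. Qed.

Lemma mul_in O I A B : O <> I -> inc B (L O I) -> inc (mul Pi O I A B) (L O I).
Proof. intros. rewrite mul_mulB. apply mulB_1; auto. apply aux_off. Qed.

Lemma mul_0l O I B : O <> I -> inc B (L O I) -> mul Pi O I O B = O.
Proof. intros. rewrite mul_mulB. apply mulB_0l; auto. apply aux_off. Qed.
Lemma mul_0r O I A : O <> I -> mul Pi O I A O = O.
Proof. intros. rewrite mul_mulB. apply mulB_0r; auto. apply aux_off. Qed.

Lemma PTdd_unique dd l P Q : ~ par dd l -> inc P l -> inc Q l -> inc Q (PT P dd) -> Q = P.
Proof.
  intros h p q r.
  assert (np : ~ par (PT P dd) l).
  { eapply par_compat. apply par_sym, PT_par. apply par_refl. auto. }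
  rewrite (meet_uniq _ _ Q np r q). symmetry. apply meet_uniq; auto. apply PT_in.
Qed.

Lemma G dd O I I' X X' Y Y' l2 : O <> I -> inc O l2 -> L O I <> l2 ->
  ~ par dd (L O I) -> ~ par dd l2 ->
  Rel dd (L O I) l2 I I' -> Rel dd (L O I) l2 X X' -> Rel dd (L O I) l2 Y Y' ->
  Rel dd (L O I) l2 (mul Pi O I X Y) (mul Pi O I' X' Y').
Proof.
  intros OI O2 l12 nd1 nd2 [i1 [i2 i3]] [x1 [x2 x3]] [y1 [y2 y3]].
  assert (O1 : inc O (L O I)) by (apply O_l; auto).
  assert (I'O : I' <> O).
  { intro e. rewrite e in i3. apply OI. apply (PTdd_unique dd (L O I)); auto. }
  assert (I'1 : ~ inc I' (L O I)).
  { intro h. assert (e : I' = I) by (apply (PTdd_unique dd (L O I)); auto).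
    apply OI. apply (inter_unique (L O I) l2); auto. rewrite <- e; auto. }
  assert (OI' : O <> I') by auto.
  assert (E2 : l2 = L O I') by (apply L_uniq; auto).
  subst l2.
  assert (I2 : ~ inc I (L O I')).
  { intro h. apply OI. apply (inter_unique (L O I) (L O I')); auto. }
  destruct (classic (X = O)) as [eX|eX].
  { assert (eX' : X' = O) by (subst X; apply (PTdd_unique dd (L O I')); auto).
    subst X X'. rewrite !mul_0l; auto. split; [|split]; auto; apply PT_in. }
  destruct (classic (Y = O)) as [eY|eY].
  { assert (eY' : Y' = O) by (subst Y; apply (PTdd_unique dd (L O I')); auto).
    subst Y Y'. rewrite !mul_0r; auto. split; [|split]; auto; apply PT_in. }
  assert (eX' : X' <> O).
  { intro e. rewrite e in x3. apply eX. apply (PTdd_unique dd (L O I)); auto. apply PT_sym; auto. }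
  assert (eY' : Y' <> O).
  { intro e. rewrite e in y3. apply eY. apply (PTdd_unique dd (L O I)); auto. apply PT_sym; auto. }
  assert (Y'1 : ~ inc Y' (L O I)).
  { intro h. apply eY'. apply (inter_unique (L O I) (L O I')); auto. }
  assert (np12 : ~ par (L O I) (L O I')) by (apply (not_par_two _ _ O); auto).
  destruct (avoid2 _ _ I I' np12 (I_l _ _ OI) I2 (L2 _ _ OI') I'1) as [Q [q1 q2]].
  rewrite (mul_any O I Q), (mul_any O I' Q); auto.
  set (C := mulB O I Q X Y). set (Q1 := P1 O I Q X).
  assert (c1 : inc C (L O I)) by (apply mulB_1; auto).
  assert (c2 : inc C (PT Q1 (L Y Q))) by (apply mulB_2; auto).
  assert (cO : C <> O) by (apply (mulB_nO O I); auto).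
  assert (q11 : inc Q1 (L O Q)) by (apply (P1_2 O I); auto).
  assert (q12 : inc Q1 (PT X (L I Q))) by (apply (P1_1 O I); auto).
  assert (q1O : Q1 <> O) by (apply (P1_nO O I); auto).
  assert (q1l : ~ inc Q1 (L O I)) by (apply (P1_notl O I); auto).
  assert (II' : I <> I') by (intro e; apply I'1; rewrite <- e; apply I_l; auto).
  assert (dI : X' = P1 O I I' X).
  { apply (P1_char O I); auto. rewrite <- (inPT_L _ _ _ i3 II').
    rewrite (PT_par_eq X _ dd); auto. apply PT_par. }
  assert (I'Q : I' <> Q) by (intro e; apply q2; rewrite <- e; apply L2; auto).
  destruct (DIL O I OI X I' Q x1 eX I'1 q1 I'Q) as [nX pX].
  rewrite <- dI in nX, pX. fold Q1 in nX, pX.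
  assert (EQ1 : Q1 = P1 O I' Q X').
  { apply (P1_char O I'); auto. apply par_inPT; auto. apply par_sym; auto. }
  set (D := P1 O I Y' X).
  assert (EY' : L O Y' = L O I') by (symmetry; apply L_uniq; auto; apply L1; auto).
  assert (d1 : inc D (L O I')) by (rewrite <- EY'; apply (P1_2 O I); auto).
  assert (dO : D <> O) by (apply (P1_nO O I); auto).
  assert (dl : ~ inc D (L O I)) by (apply (P1_notl O I); auto).
  assert (QY' : Q <> Y') by (intro e; apply q2; rewrite e; auto).
  destruct (DIL O I OI X Q Y' x1 eX q1 Y'1 QY') as [nD pD].
  fold Q1 D in nD, pD.
  assert (QO : Q <> O) by (intro e; apply q1; rewrite e; auto).
  assert (CQ1 : C <> Q1) by (intro e; apply q1l; rewrite <- e; auto).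
  assert (pC : par (L Y Y') (L C D)).
  { apply (CD O (L O I) (L O Q) (L O I') Y Q Y' C Q1 D); auto.
    - intro e. apply q1. rewrite e. apply L2; auto.
    - intro e. apply q2. rewrite <- e. apply L2; auto.
    - apply L1; auto.
    - apply L2; auto.
    - rewrite (L_sym C Q1); auto. apply par_sym. apply inPT_par; auto. }
  assert (YY' : Y <> Y') by (intro e; apply Y'1; rewrite <- e; auto).
  assert (CD' : C <> D) by (intro e; apply dl; rewrite <- e; auto).
  assert (Rc : inc D (PT C dd)).
  { rewrite <- (PT_par_eq C (L Y Y') dd). apply par_inPT; auto. apply par_sym; auto.
    rewrite <- (inPT_L _ _ _ y3 YY'). apply PT_par. }
  split; auto. split.
  - apply mulB_1; auto.
  - replace (mulB O I' Q X' Y') with D; auto. symmetry.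
    apply (mulB_char O I' OI' Q X' Y' Q1 D); auto.
    + rewrite EQ1. apply (P1_1 O I'); auto.
    + apply par_inPT. intro e; apply nD; auto. rewrite (L_sym Y' Q); auto. apply par_sym; auto.
Qed.

Lemma T dd O I O' I' X X' Y Y' l2 : O <> I -> par (L O I) l2 -> L O I <> l2 ->
  ~ par dd (L O I) -> ~ par dd l2 -> Rel dd (L O I) l2 O O' ->
  Rel dd (L O I) l2 I I' -> Rel dd (L O I) l2 X X' -> Rel dd (L O I) l2 Y Y' ->
  Rel dd (L O I) l2 (mul Pi O I X Y) (mul Pi O' I' X' Y').
Proof.
  intros OI p12 l12 nd1 nd2 [o1 [o2 o3]] [i1 [i2 i3]] [x1 [x2 x3]] [y1 [y2 y3]].
  assert (OO' : O <> O').
  { intro e. apply (par_disj _ _ O p12 l12 o1). rewrite e; auto. }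
  assert (En : PT O dd = L O O') by (apply inPT_L; auto).
  assert (pn : par (L O O') dd) by (rewrite <- En; apply PT_par).
  assert (O'I' : O' <> I').
  { intro e. rewrite <- e in i3. apply OI. symmetry.
    apply (PTdd_unique dd (L O I)); auto. apply (PT_trans O'); apply PT_sym; auto. }
  assert (E2 : l2 = L O' I') by (apply L_uniq; auto). subst l2.
  assert (O'1 : ~ inc O' (L O I)) by (intro h; apply (par_disj _ _ O' p12 l12 h); auto).
  assert (notn : forall P, inc P (L O I) -> P <> O -> ~ inc P (L O O')).
  { intros P h e h2. apply O'1. rewrite (two_pts O P (L O I) (L O O')); auto;
    first [apply O'_n; auto | apply O_l; auto | apply O_n; auto]. }
  assert (EOP : forall P, inc P (L O I) -> P <> O -> L O P = L O I).
  { intros P h e. symmetry. apply L_uniq; auto; try (apply O_l; auto). }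
  assert (E12 : PT O' (L O I) = L O' I').
  { symmetry. apply PT_uniq. apply L1; auto. apply par_sym; auto. }
  assert (tauR : forall P P', inc P (L O I) -> P <> O -> inc P' (L O' I') -> inc P' (PT P dd) ->
     P' = tau O O' P).
  { intros P P' h e h1 h2. apply tau_char; auto. rewrite (PT_par_eq P _ dd); auto.
    rewrite EOP, E12; auto. }
  assert (tauIn : forall P, inc P (L O I) -> P <> O -> inc (tau O O' P) (L O' I')).
  { intros P h e. rewrite <- E12, <- (EOP P h e). apply tau_2; auto. }
  assert (tauD : forall P, inc P (L O I) -> P <> O -> inc (tau O O' P) (PT P dd)).
  { intros P h e. rewrite <- (PT_par_eq P _ dd pn). apply tau_1; auto. }
  destruct (classic (X = O)) as [eX|eX].
  { subst X. assert (X' = O') by (apply (PTdd_unique dd (L O' I') O' X'); auto;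
      first [apply L1; auto | apply (PT_trans O); auto]).
    subst X'. rewrite !mul_0l; auto. split; [|split]; auto. }
  destruct (classic (Y = O)) as [eY|eY].
  { subst Y. assert (Y' = O') by (apply (PTdd_unique dd (L O' I') O' Y'); auto;
      first [apply L1; auto | apply (PT_trans O); auto]).
    subst Y'. rewrite !mul_0r; auto. split; [|split]; auto. }
  assert (IO : I <> O) by auto.
  assert (np : ~ par (L O I) (L O O')).
  { apply (not_par_two _ _ O). intro e. apply O'1. rewrite e. apply O'_n; auto. apply O_l; auto. apply O_n; auto. }
  destruct (avoid2 _ _ I O' np i1 (notn I i1 IO) (O'_n O O' OO') O'1) as [Q [q1 q2]].
  assert (QO : Q <> O) by (intro e; apply q1; rewrite e; apply O_l; auto).
  set (tQ := tau O O' Q).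
  assert (tQ2 : inc tQ (PT O' (L O Q))) by (apply tau_2; auto).
  assert (tQn : ~ inc tQ (L O O')) by (apply tau_notn; auto).
  assert (tQO' : O' <> tQ) by (intro e; apply tQn; rewrite <- e; apply O'_n; auto).
  assert (ELtQ : PT O' (L O Q) = L O' tQ) by (apply inPT_L; auto).
  assert (tQl : ~ inc tQ (L O' I')).
  { intro h. apply q1. rewrite <- E12 in h.
    assert (E3 : PT O' (L O Q) = PT O' (L O I)).
    { rewrite ELtQ. symmetry. apply L_uniq; auto. apply PT_in. }
    assert (p3 : par (L O Q) (L O I)).
    { eapply par_trans. apply par_sym, (PT_par O' (L O Q)). rewrite E3. apply PT_par. }
    rewrite <- (par_common _ _ O p3). apply L2; auto. apply L1; auto. apply O_l; auto. }
  rewrite (mul_any O I Q), (mul_any O' I' tQ); auto.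
  set (C := mulB O I Q X Y). set (Q1 := P1 O I Q X).
  assert (c1 : inc C (L O I)) by (apply mulB_1; auto).
  assert (c2 : inc C (PT Q1 (L Y Q))) by (apply mulB_2; auto).
  assert (cO : C <> O) by (apply (mulB_nO O I); auto).
  assert (q11 : inc Q1 (L O Q)) by (apply (P1_2 O I); auto).
  assert (q12 : inc Q1 (PT X (L I Q))) by (apply (P1_1 O I); auto).
  assert (q1O : Q1 <> O) by (apply (P1_nO O I); auto).
  assert (q1l : ~ inc Q1 (L O I)) by (apply (P1_notl O I); auto).
  assert (q1n : ~ inc Q1 (L O O')).
  { apply (not_on_other (L O Q) (L O O') O); auto. intro e. apply q2. rewrite <- e. apply L2; auto.
    apply L1; auto. apply O_n; auto. }
  assert (EQ1 : L O Q1 = L O Q) by (symmetry; apply L_uniq; auto; apply L1; auto).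
  assert (eX' : X' = tau O O' X) by (apply tauR; auto).
  assert (eI' : I' = tau O O' I) by (apply tauR; auto).
  assert (eY' : Y' = tau O O' Y) by (apply tauR; auto).
  assert (XQ1 : X <> Q1) by (intro e; apply q1l; rewrite <- e; auto).
  assert (IQ : I <> Q) by (intro e; apply q1; rewrite <- e; auto).
  assert (CQ1 : C <> Q1) by (intro e; apply q1l; rewrite <- e; auto).
  assert (YQ : Y <> Q) by (intro e; apply q1; rewrite <- e; auto).
  destruct (TAU O O' OO' X Q1 (notn X x1 eX) q1n XQ1) as [nXQ pXQ].
  destruct (TAU O O' OO' I Q (notn I i1 IO) q2 IQ) as [nIQ pIQ].
  destruct (TAU O O' OO' C Q1 (notn C c1 cO) q1n CQ1) as [nCQ pCQ].
  destruct (TAU O O' OO' Y Q (notn Y y1 eY) q2 YQ) as [nYQ pYQ].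
  rewrite <- eX' in nXQ, pXQ. rewrite <- eI' in nIQ, pIQ. rewrite <- eY' in nYQ, pYQ.
  fold tQ in nIQ, pIQ, nYQ, pYQ.
  set (tQ1 := tau O O' Q1) in *. set (tC := tau O O' C) in *.
  split; auto. split.
  - apply mulB_1; auto.
  - replace (mulB O' I' tQ X' Y') with tC.
    + apply tauD; auto.
    + symmetry. apply (mulB_char O' I' O'I' tQ X' Y' tQ1 tC); auto.
      * rewrite <- ELtQ, <- EQ1. apply tau_2; auto.
      * apply par_inPT; auto. eapply par_trans. apply par_sym, pXQ.
        apply (par_trans _ (L I Q)). apply inPT_par; auto. auto.
      * apply tauIn; auto.
      * apply par_inPT. intro e; apply nCQ; auto.
        rewrite (L_sym tQ1 tC). 2: { intro e; apply nCQ; auto. }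
        eapply par_trans. apply par_sym, pCQ. rewrite (L_sym C Q1); auto.
        apply (par_trans _ (L Y Q)). apply inPT_par; auto. auto.
Qed.

Lemma Rel_fun dd l1 l2 P P' P'' : ~ par dd l2 -> Rel dd l1 l2 P P' -> Rel dd l1 l2 P P'' -> P'' = P'.
Proof.
  intros h [a [b c]] [a' [b' c']]. apply (PTdd_unique dd l2); auto. apply (PT_trans P); auto.
Qed.

Lemma Rel_inj dd l1 l2 P Q Z : ~ par dd l1 -> Rel dd l1 l2 P Z -> Rel dd l1 l2 Q Z -> Q = P.
Proof.
  intros h [a [b c]] [a' [b' c']]. apply (PTdd_unique dd l1); auto.
  apply (PT_trans Z); apply PT_sym; auto.
Qed.

Lemma projRel dd l1 l3 P : ~ par dd l3 -> inc P l1 -> Rel dd l1 l3 P (mt l3 (PT P dd)).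
Proof.
  intros h p.
  assert (np : ~ par l3 (PT P dd)).
  { intro q. apply h. apply par_sym. eapply par_trans. exact q. apply PT_par. }
  destruct (meet_spec _ _ np). split; auto.
Qed.

Lemma MP dd O I O' I' X X' Y Y' l2 : O <> I ->
  ~ par dd (L O I) -> ~ par dd l2 -> Rel dd (L O I) l2 O O' ->
  Rel dd (L O I) l2 I I' -> Rel dd (L O I) l2 X X' -> Rel dd (L O I) l2 Y Y' ->
  Rel dd (L O I) l2 (mul Pi O I X Y) (mul Pi O' I' X' Y').
Proof.
  intros OI nd1 nd2 RO RI RX RY.
  destruct (classic (L O I = l2)) as [E|E].
  { subst l2.
    assert (RS : forall P P', Rel dd (L O I) (L O I) P P' -> P' = P).
    { intros P P' [a [b c]]. apply (PTdd_unique dd (L O I)); auto. }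
    rewrite (RS _ _ RO), (RS _ _ RI), (RS _ _ RX), (RS _ _ RY).
    destruct RY as [y _]. split; [|split]; try apply mul_in; auto. apply PT_in. }
  destruct (classic (O' = O)) as [e|e].
  { subst O'. destruct RO as [_ [o2 _]]. apply G; auto. }
  destruct (classic (par (L O I) l2)) as [p|p].
  { apply T; auto. }
  assert (O2 : ~ inc O l2).
  { intro h. apply e. destruct RO as [a [b c]]. apply (PTdd_unique dd l2); auto. }
  set (l3 := PT O l2).
  assert (O3 : inc O l3) by apply PT_in.
  assert (p3 : par l3 l2) by apply PT_par.
  assert (l32 : l3 <> l2) by (intro h; apply O2; rewrite <- h; auto).
  assert (l13 : L O I <> l3) by (intro h; apply p; rewrite h; auto).
  assert (nd3 : ~ par dd l3).
  { intro q. apply nd2. eapply par_trans. exact q. auto. }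
  set (pr := fun P => mt l3 (PT P dd)).
  destruct RO as [o1 [o2 o3]].
  assert (RI3 := projRel dd (L O I) l3 I nd3 (proj1 RI)).
  assert (RX3 := projRel dd (L O I) l3 X nd3 (proj1 RX)).
  assert (RY3 := projRel dd (L O I) l3 Y nd3 (proj1 RY)).
  fold (pr I) in RI3. fold (pr X) in RX3. fold (pr Y) in RY3.
  pose proof (G dd O I (pr I) X (pr X) Y (pr Y) l3 OI O3 l13 nd1 nd3 RI3 RX3 RY3) as H1.
  assert (I3O : pr I <> O).
  { intro h. apply OI. destruct RI3 as [a [b c]]. rewrite h in c.
    apply (PTdd_unique dd (L O I)); auto. }
  assert (E3 : l3 = L O (pr I)) by (apply L_uniq; auto; apply RI3).
  rewrite E3 in H1, p3, l32, nd3, RX3, RY3, RI3.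
  assert (lift : forall P P3 P', Rel dd (L O I) (L O (pr I)) P P3 -> Rel dd (L O I) l2 P P' ->
             Rel dd (L O (pr I)) l2 P3 P').
  { intros P P3 P' [a [b c]] [a' [b' c']]. split; [|split]; auto. apply (PT_trans P); auto. }
  assert (RO3 : Rel dd (L O (pr I)) l2 O O').
  { split; [|split]; auto. apply L1; auto. }
  pose proof (T dd O (pr I) O' I' (pr X) X' (pr Y) Y' l2 (not_eq_sym I3O) p3 l32 nd3 nd2 RO3
     (lift _ _ _ RI3 RI) (lift _ _ _ RX3 RX) (lift _ _ _ RY3 RY)) as H2.
  destruct H1 as [a [b c]]. destruct H2 as [a' [b' c']].
  split; [|split]; auto. rewrite <- (PT_same _ _ _ c). auto.
Qed.

Lemma main_aux (O I : Pt) (l2 : Ln) (f : Pt -> Pt) :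
  O <> I -> parallel_projection Pi (L O I) l2 f ->
  forall A B : Pt, inc A (L O I) -> inc B (L O I) -> B <> O ->
    f (ratio Pi O I A B) = ratio Pi (f O) (f I) (f A) (f B).
Proof.
  intros OI [d [n1 [n2 H]]] A B a b BO.
  assert (nd1 : ~ par d (L O I)) by exact n1.
  assert (nd2 : ~ par d l2) by exact n2.
  assert (R : forall P, inc P (L O I) -> Rel d (L O I) l2 P (f P)).
  { intros P p. destruct (H P p) as [h1 [m [m1 [m2 m3]]]]. split; [|split]; auto.
    rewrite <- (PT_uniq P d m); auto. }
  set (Bi := inv Pi O I B).
  assert (HB : inc Bi (L O I) /\ mul Pi O I B Bi = I /\ mul Pi O I Bi B = I).
  { apply (the_point_spec (fun Y => inc Y (L O I) /\ mul Pi O I B Y = I /\ mul Pi O I Y B = I)).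
    destruct (EXINV O I OI _ B (aux_off O I) b BO) as [Y [y1 [y2 y3]]].
    exists Y. rewrite !mul_mulB. auto. }
  destruct HB as [bi1 [bi2 bi3]].
  assert (RO := R O (O_l _ _ OI)). assert (RI := R I (I_l _ _ OI)).
  assert (fOI : f O <> f I).
  { intro e. apply OI. apply (Rel_inj d (L O I) l2 I O (f I)); auto. rewrite <- e; auto. }
  assert (E2 : l2 = L (f O) (f I)) by (apply L_uniq; auto; [apply RO | apply RI]).
  assert (M1 := MP d O I (f O) (f I) B (f B) Bi (f Bi) l2 OI nd1 nd2 RO RI (R B b) (R Bi bi1)).
  assert (M2 := MP d O I (f O) (f I) Bi (f Bi) B (f B) l2 OI nd1 nd2 RO RI (R Bi bi1) (R B b)).
  rewrite bi2 in M1. rewrite bi3 in M2.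
  assert (e1 := Rel_fun _ _ _ _ _ _ nd2 RI M1).
  assert (e2 := Rel_fun _ _ _ _ _ _ nd2 RI M2).
  assert (fBO : f B <> f O).
  { intro e. apply BO. apply (Rel_inj d (L O I) l2 O B (f O)); auto. rewrite <- e; auto. }
  set (Bi' := inv Pi (f O) (f I) (f B)).
  assert (HB' : inc Bi' (L (f O) (f I)) /\ mul Pi (f O) (f I) (f B) Bi' = f I /\
                mul Pi (f O) (f I) Bi' (f B) = f I).
  { apply (the_point_spec (fun Y => inc Y (L (f O) (f I)) /\ mul Pi (f O) (f I) (f B) Y = f I /\
                                     mul Pi (f O) (f I) Y (f B) = f I)).
    exists (f Bi). split; auto. rewrite <- E2. apply (R Bi bi1). }
  destruct HB' as [c1 [c2 c3]].
  assert (EBi : Bi' = f Bi).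
  { assert (c2' : mul Pi (f O) (f I) (f B) Bi' = mul Pi (f O) (f I) (f B) (f Bi)) by (rewrite c2; symmetry; exact e1).
    clear c2. rename c2' into c2. rewrite !mul_mulB in c2.
    apply (MULINJ (f O) (f I) fOI _ (f B)) in c2; auto.
    apply aux_off. rewrite <- E2. apply (R B b). rewrite <- E2. apply (R Bi bi1). }
  unfold ratio. fold Bi Bi'. rewrite EBi.
  assert (M3 := MP d O I (f O) (f I) Bi (f Bi) A (f A) l2 OI nd1 nd2 RO RI (R Bi bi1) (R A a)).
  apply (Rel_fun d (L O I) l2 (mul Pi O I Bi A)); auto.
  apply R. apply mul_in; auto.
Qed.
End S.

Theorem mainTheorem9 (Pi : DesarguesAffinePlane) (O I : Point Pi)
  (l2 : Line Pi) (f : Point Pi -> Point Pi) :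
  O <> I ->
  parallel_projection Pi (line_thru Pi O I) l2 f ->
  forall A B : Point Pi,
    inc A (line_thru Pi O I) -> inc B (line_thru Pi O I) -> B <> O ->
    f (ratio Pi O I A B) = ratio Pi (f O) (f I) (f A) (f B).
Proof. exact (main_aux Pi O I l2 f). Qed.
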